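(* Let $H$ be a regular non-bipartite graph whose adjacency eigenvalues are integers all having the same 2-adic valuation $\nu_2$. If $G=K_{2}\times H$, then for every vertex $u$ of $G$, $\uparrow^{2}G$ has Laplacian perfect state transfer between $(0,u)$ and $(1,u)$.
   Context: All graphs are simple, undirected and unweighted. The direct product $G\times H$ is the graph with adjacency matrix $A(G)\otimes A(H)$. For a nonzero integer $n$, $\nu_2(n)$ is the exponent of the largest power of $2$ dividing $n$, and $\nu_2(0)=\infty$. The blow-up $\uparrow^{2}G$ has vertex set $\mathbb{Z}_2\times V(G)$, with $(l,u)\sim(m,v)$ iff $u\sim v$ in $G$. A graph with Laplacian $L=D-A$ has Laplacian perfect state transfer between $a,b$ if $\exp(i\tau L)\mathbf{e}_a=\gamma\mathbf{e}_b$ for some $\tau>0$, $\gamma\in\mathbb{C}$. *)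

(* Defs.v *)
From HB Require Import structures.
From mathcomp Require Import all_boot all_order all_algebra.
From mathcomp Require Import all_classical all_reals all_analysis.
From mathcomp Require Import complex.
Set Implicit Arguments. Unset Strict Implicit. Unset Printing Implicit Defensive.
Import Order.TTheory GRing.Theory Num.Theory.
Import numFieldNormedType.Exports.
Local Open Scope ring_scope.
Local Open Scope classical_set_scope.

(** The complex numbers over a real type R, seen as a numFieldType
    (so that MathComp-Analysis equips it, and matrices over it, with
    its standard normed topology). *)
Definition CC (R : realType) : numFieldType := R[i].
Definition Cre (R : realType) (x : R) : CC R := (x%:C)%C.
Definition Ci (R : realType) : CC R := Complex 0 1.

Definition simple_graph (T : finType) (e : rel T) : Prop :=
  symmetric e /\ irreflexive e.

Definition deg (T : finType) (e : rel T) (x : T) : nat := #|[set y | e x y]|.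

Definition regular (T : finType) (e : rel T) : Prop :=
  exists k : nat, forall x : T, deg e x = k.

Definition bipartite (T : finType) (e : rel T) : Prop :=
  exists f : T -> bool, forall x y, e x y -> f x != f y.

Definition adjmx (F : pzRingType) (T : finType) (e : rel T) : 'M[F]_#|T| :=
  \matrix_(i, j) (e (enum_val i) (enum_val j))%:R.

Definition lapmx (F : pzRingType) (T : finType) (e : rel T) : 'M[F]_#|T| :=
  \matrix_(i, j) ((i == j)%:R * (deg e (enum_val i))%:R) - adjmx F e.

Definition K2 : rel 'I_2 := fun i j => i != j.

Definition dprod_graph (T1 T2 : finType) (e1 : rel T1) (e2 : rel T2)
  : rel (T1 * T2) := fun x y => e1 x.1 y.1 && e2 x.2 y.2.

Definition blowup2 (T : finType) (e : rel T) : rel ('I_2 * T) :=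
  fun x y => e x.2 y.2.

(** 2-adic valuation on int, with nu2 0 = infinity (encoded as None). *)
Definition nu2 (z : int) : option nat :=
  if z == 0 then None else Some (logn 2 `|z|%N).

Definition mexp (R : realType) (n : nat) (A : 'M[CC R]_n) : 'M[CC R]_n :=
  limn (series (fun k : nat => (k`!%:R)^-1 *: A ^+ k)).

Definition evec (F : pzRingType) (T : finType) (x : T) : 'cV[F]_#|T| :=
  delta_mx (enum_rank x) ord0.

Definition lap_PST (R : realType) (T : finType) (e : rel T) (a b : T) : Prop :=
  exists tau : R, 0 < tau /\
  exists gamma : CC R,
    mexp ((Ci R * Cre tau) *: lapmx (CC R) e) *m evec (CC R) a
    = gamma *: evec (CC R) b.

(* Main.v *)
Require Import Defs.
From HB Require Import structures.
From mathcomp Require Import all_boot all_order all_algebra.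
From mathcomp Require Import all_classical all_reals all_analysis.
From mathcomp Require Import complex.
Import Order.TTheory GRing.Theory Num.Theory.
Import numFieldNormedType.Exports.
Local Open Scope ring_scope.
From mathcomp Require Import ring zify.
Local Open Scope classical_set_scope.
Section Scal.
Variable R : realType.
Lemma normCre (a : R) : `|Cre a| = Cre `|a|.
Proof. rewrite normc_def /= expr0n /= addr0 sqrtr_sqr //. Qed.

Lemma cvgCre (u : nat -> R) (a : R) : u n @[n --> \oo] --> a ->
  (Cre (u n) : CC R) @[n --> \oo] --> Cre a.
Proof.
move=> /cvgrPdist_lt H; apply/cvgrPdist_lt => e e0.
have [He Re0] : complex.Im e = 0 /\ 0 < complex.Re e.
  move: e0; rewrite ltcE => /andP[/eqP /= H1 H2]. by [].
have := H _ Re0; apply: filterS => n Hn.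
have -> : e = Cre (complex.Re e) by case: e e0 He Re0 {Hn} => ? ? /= _ ->.
rewrite /Cre -rmorphB normCre /Cre ltcR //.
Qed.

Lemma Ci2 : Ci R ^+ 2 = -1.
Proof. by apply/eqP; rewrite eq_complex /= !mul0r !mulr0 mul1r addr0 oppr0 sub0r !eqxx. Qed.

Lemma CiX (m : nat) : Ci R ^+ m.*2 = (-1) ^+ m /\ Ci R ^+ m.*2.+1 = Ci R * (-1) ^+ m.
Proof. by rewrite exprS -muln2 mulnC exprM Ci2. Qed.

Lemma exp_term_even (t : R) (m : nat) :
  ((m.*2)`!%:R)^-1 * (Ci R * Cre t) ^+ m.*2 =
  Cre (cos_coeff t m.*2) + Ci R * Cre (sin_coeff t m.*2).
Proof.
rewrite /cos_coeff /sin_coeff /= /Cre exprMn (CiX m).1 odd_double doubleK /=.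
rewrite !mul1r !mul0r rmorph0 mulr0 addr0 !rmorphM rmorphXn rmorphN1 fmorphV rmorph_nat rmorphXn.
by rewrite mulrC. Qed.

Lemma exp_term_odd (t : R) (m : nat) :
  ((m.*2.+1)`!%:R)^-1 * (Ci R * Cre t) ^+ m.*2.+1 =
  Cre (cos_coeff t m.*2.+1) + Ci R * Cre (sin_coeff t m.*2.+1).
Proof.
rewrite /cos_coeff /sin_coeff /= /Cre exprMn (CiX m).2 odd_double doubleK /=.
rewrite !mul1r !mul0r rmorph0 add0r !rmorphM rmorphXn rmorphN1 fmorphV rmorph_nat rmorphXn.
by rewrite mulrC !(mulrA (Ci R)).
Qed.

Lemma exp_term (t : R) (k : nat) :
  (k`!%:R)^-1 * (Ci R * Cre t) ^+ k =
  Cre (cos_coeff t k) + Ci R * Cre (sin_coeff t k).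
Proof.
rewrite -(odd_double_half k); case: (odd k) => /=.
  by rewrite add1n exp_term_odd.
by rewrite add0n exp_term_even.
Qed.

Lemma cos_cvg (t : R) : series (cos_coeff t) n @[n --> \oo] --> cos t.
Proof. rewrite cos.unlock; exact: is_cvg_series_cos_coeff. Qed.
Lemma sin_cvg (t : R) : series (sin_coeff t) n @[n --> \oo] --> sin t.
Proof. rewrite sin.unlock; exact: is_cvg_series_sin_coeff. Qed.

Lemma expi_cvg (t : R) :
  series (fun k => (k`!%:R)^-1 * (Ci R * Cre t) ^+ k) n @[n --> \oo] -->
  Cre (cos t) + Ci R * Cre (sin t).
Proof.
have -> : series (fun k => (k`!%:R)^-1 * (Ci R * Cre t) ^+ k) =
   fun n => Cre (series (cos_coeff t) n) + Ci R * Cre (series (sin_coeff t) n).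
  apply/funext => n; rewrite /series /= (eq_bigr _ (fun k _ => exp_term t k)).
  by rewrite big_split /= -mulr_sumr /Cre !rmorph_sum.
apply: cvgD; first exact/cvgCre/cos_cvg.
by apply: cvgMr; exact/cvgCre/sin_cvg.
Qed.

End Scal.
Lemma mx_cvg_entry {K : numFieldType} m n (u : nat -> 'M[K]_(m,n)) (M : 'M[K]_(m,n)) :
  (forall i j, u N i j @[N --> \oo] --> M i j) -> u N @[N --> \oo] --> M.
Proof.
move=> H A /= [P PM sPA].
have : \forall N \near \oo, forall ij : 'I_m * 'I_n, P ij.1 ij.2 (u N ij.1 ij.2).
  apply: filter_forall => -[i j] /=; exact: (H i j _ (PM i j)).
by apply: filterS => N HN; apply: sPA => i j; exact: (HN (i, j)).
Qed.

Lemma entry_conj (K : pzRingType) n (Q P : 'M[K]_n) (v : 'rV[K]_n) i j :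
  (Q *m diag_mx v *m P) i j = \sum_l Q i l * v 0 l * P l j.
Proof. by rewrite !mxE; apply: eq_bigr => l _; rewrite mul_mx_diag mxE. Qed.

Lemma mexp_conj (R : realType) n (P Q : 'M[CC R]_n) (d f : 'rV[CC R]_n) :
  P *m Q = 1%:M ->
  (forall l, series (fun k => (k`!%:R)^-1 * (d 0 l)^+k) N @[N --> \oo] --> f 0 l) ->
  mexp (Q *m diag_mx d *m P) = Q *m diag_mx f *m P.
Proof.
move=> PQ Hf.
have QP : Q *m P = 1%:M := mulmx1C PQ.
have Epow k : (Q *m diag_mx d *m P) ^+ k = Q *m diag_mx (\row_l (d 0 l ^+ k)) *m P.
  elim: k => [|k IH].
    rewrite expr0 (_ : \row_l _ = const_mx 1); last by apply/rowP => l; rewrite !mxE.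
    by rewrite diag_const_mx mulmx1 QP.
  rewrite exprS IH -mulmxE !mulmxA -[Q *m _ *m _ *m Q]mulmxA PQ mulmx1.
  by rewrite -[Q *m _ *m _]mulmxA mulmx_diag; congr (_ *m diag_mx _ *m _); apply/rowP => l; rewrite !mxE exprS.
rewrite /mexp; apply: cvg_lim; first exact: norm_hausdorff.
apply: mx_cvg_entry => i j.
have -> : (fun N => series (fun k => (k`!%:R)^-1 *: (Q *m diag_mx d *m P) ^+ k) N i j) =
  fun N => \sum_l Q i l * series (fun k => (k`!%:R)^-1 * (d 0 l)^+k) N * P l j.
  apply/funext => N; rewrite /series /= (@summxE (CC R)).
  transitivity (\sum_(0 <= k < N) \sum_l (k`!%:R)^-1 * (Q i l * d 0 l ^+ k * P l j)).
    apply: eq_bigr => k _.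
    rewrite mxE Epow entry_conj mulr_sumr; apply: eq_bigr => l _; rewrite mxE; ring.
  rewrite exchange_big /=; apply: eq_bigr => l _.
  rewrite mulr_sumr mulr_suml; apply: eq_bigr => k _; ring.
rewrite entry_conj; apply: cvg_big => //; first exact: add_continuous.
move=> l _; apply: cvgMl; apply: cvgMr; exact: Hf.
Qed.


Lemma I2P (l : 'I_2) : l = ord0 \/ l = ord_max.
Proof. by case: l => -[|[|//]] Hl; [left|right]; apply: val_inj. Qed.

Lemma sum2 (K : nmodType) (F : 'I_2 -> K) : \sum_i F i = F ord0 + F ord_max.
Proof. by rewrite big_ord_recl big_ord1; congr (_ + F _); apply: val_inj. Qed.

Lemma sumV (K : nmodType) (V : finType) (F : V -> K) :
  \sum_(i < #|V|) F (enum_val i) = \sum_v F v.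
Proof. by rewrite -big_enum_val. Qed.

Lemma sumP (K : nmodType) (I J : finType) (F : I * J -> K) :
  \sum_p F p = \sum_i \sum_j F (i, j).
Proof. by rewrite (pair_bigA _ (fun i j => F (i, j))); apply: eq_bigr => -[]. Qed.

Definition flip (l : 'I_2) : 'I_2 := if l == ord0 then ord_max else ord0.
Lemma flip0 : flip ord0 = ord_max. Proof. by []. Qed.
Lemma flip1 : flip ord_max = ord0. Proof. by []. Qed.

Section G.
Variable R : realType.
Variables (T : finType) (e : rel T).
Hypothesis esymm : symmetric e.
Variable k : nat.
Hypothesis hk : forall x, deg e x = k.

Local Notation C := (CC R).
Local Notation V := (('I_2 * ('I_2 * T))%type : finType).
Definition eG := dprod_graph K2 e.
Definition eb := blowup2 eG.
Definition sw (v : V) : V := (flip v.1, v.2).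

Lemma degE (U : finType) (r : rel U) x : deg r x = \sum_y (r x y : nat).
Proof.
rewrite /deg -sum1_card big_mkcond /=; apply: eq_bigr => y _.
have -> : (y \in in_set [set y | r x y]) = r x y.
  by apply/idP/idP => [/set_mem|/mem_set] //.
by case: (r x y).
Qed.

Lemma deg_eb v : deg eb v = (k * 2)%N.
Proof.
rewrite degE sumP sum2 !sumP !sum2 /eb /blowup2 /eG /dprod_graph /K2 /=.
rewrite -(hk v.2.2) degE.
by case: (I2P v.2.1) => ->; rewrite eqxx /= !big1_eq ?add0r ?addr0 muln2 -addnn.
Qed.

Lemma flipK : involutive flip.
Proof. by move=> l; case: (I2P l) => ->. Qed.
Lemma swK : involutive sw.
Proof. by move=> [l g]; rewrite /sw /= flipK. Qed.

Lemma sumI (K : nmodType) (U : finType) (F : 'I_#|U| -> K) :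
  \sum_i F i = \sum_v F (enum_rank v).
Proof. by rewrite -(@sumV _ _ (fun v => F (enum_rank v))); apply: eq_bigr => i _; rewrite enum_valK. Qed.

Definition rf (r : 'rV[C]_#|V|) (v : V) := r 0 (enum_rank v).

Lemma lap_row (r : 'rV[C]_#|V|) (w : V) :
  (r *m lapmx C eb) 0 (enum_rank w) =
  rf r w * (k * 2)%:R - \sum_v rf r v * (eb v w)%:R.
Proof.
rewrite mxE sumI.
transitivity (\sum_v (rf r v * ((v == w)%:R * (k*2)%:R) - rf r v * (eb v w)%:R)).
  apply: eq_bigr => v _; rewrite !mxE !enum_rankK deg_eb mulrBr (inj_eq enum_rank_inj) //.
rewrite sumrB (bigD1 w) //= eqxx mul1r big1 ?addr0 // => v /negbTE ->.
by rewrite mul0r mulr0.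
Qed.

Definition Wm : 'M[C]_#|V| := \matrix_(i, j) (enum_val j == sw (enum_val i))%:R.

Lemma W_row (r : 'rV[C]_#|V|) (w : V) : (r *m Wm) 0 (enum_rank w) = rf r (sw w).
Proof.
rewrite mxE sumI (bigD1 (sw w)) //= !mxE !enum_rankK swK eqxx mulr1 big1 ?addr0 //.
move=> v Hv; rewrite !mxE !enum_rankK.
case: eqP => [Hw|]; last by rewrite mulr0.
by move: Hv; rewrite Hw swK eqxx.
Qed.

Lemma W_evec (a : V) : Wm *m evec C a = evec C (sw a).
Proof.
apply/matrixP => i j; rewrite !mxE (bigD1 (enum_rank a)) //= !mxE.
rewrite big1 ?addr0; last by move=> i0 /negbTE Hi; rewrite !mxE Hi mulr0.
rewrite ord1 !eqxx mulr1 enum_rankK.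
have -> : (a == sw (enum_val i)) = (i == enum_rank (sw a)).
  apply/eqP/eqP => [->|->]; first by rewrite swK enum_valK.
  by rewrite enum_rankK swK.
by rewrite andbT.
Qed.


Definition S (f : V -> C) (w : V) := \sum_v f v * (eb v w)%:R.
Definition t (f : V -> C) (h : 'I_2 * T) := f (ord0, h) + f (ord_max, h).

Lemma S_sw f w : S f (sw w) = S f w.
Proof. by []. Qed.

Lemma S_split f w : S f w = \sum_x t f (flip w.2.1, x) * (e x w.2.2)%:R.
Proof.
rewrite /S sumP sum2 -big_split /=.
rewrite (eq_bigr (fun g => t f g * (eG g w.2)%:R)); last by move=> g _; rewrite mulrDl.
rewrite sumP sum2 /eG /dprod_graph /K2 /=.
case: (I2P w.2.1) => -> /=.
  rewrite (eq_bigr (fun _ => 0)); last by move=> *; rewrite mulr0.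
  by rewrite big1_eq add0r.
rewrite [X in _ + X](eq_bigr (fun _ => 0)); last by move=> *; rewrite mulr0.
by rewrite big1_eq addr0.
Qed.

Lemma eig_link (p : T -> C) mu :
  (forall y, \sum_x p x * (e x y)%:R = mu * p y) -> (exists y, p y != 0) ->
  eigenvalue (adjmx C e) mu.
Proof.
move=> Hp [y0 Hy0]; apply/eigenvalueP; exists (\row_i p (enum_val i)).
  apply/rowP => j; rewrite !mxE sumI -[j]enum_valK -Hp.
  by apply: eq_bigr => x _; rewrite !mxE !enum_rankK.
apply/eqP => /rowP /(_ (enum_rank y0)); rewrite !mxE enum_rankK => /eqP.
by rewrite (negbTE Hy0).
Qed.


Lemma two_neq0 : (2 : C) != 0.
Proof. by rewrite pnatr_eq0. Qed.

Local Notation K := ((k * 2)%:R : C).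

Lemma t_eq f l (H : forall w, f w * K - S f w = l * f w) (i : 'I_2) y :
  t f (i, y) * K - 2 * \sum_x t f (flip i, x) * (e x y)%:R = l * t f (i, y).
Proof.
have h0 := H (ord0, (i, y)); have h1 := H (ord_max, (i, y)).
have E : S f (ord_max, (i, y)) = S f (ord0, (i, y)) by [].
rewrite E S_split /= in h1; rewrite S_split /= in h0.
rewrite /t mulrDr -h0 -h1; ring.
Qed.

Lemma t_eig f l (H : forall w, f w * K - S f w = l * f w) h :
  t f h != 0 -> exists s mu, eigenvalue (adjmx C e) mu /\ l = K + 2 * ((-1) ^+ s * mu).
Proof.
move=> Ht.
have X1 y : \sum_x t f (ord_max, x) * (e x y)%:R = (t f (ord0, y) * K - l * t f (ord0, y)) / 2.
  by rewrite -(@t_eq f l H ord0 y); field.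
have X0 y : \sum_x t f (ord0, x) * (e x y)%:R = (t f (ord_max, y) * K - l * t f (ord_max, y)) / 2.
  by rewrite -(@t_eq f l H ord_max y); field.
pose p x := t f (ord0, x) + t f (ord_max, x).
pose q x := t f (ord0, x) - t f (ord_max, x).
case: (boolP (p h.2 != 0)) => Hp.
  exists true, ((K - l) / 2); split; last by field.
  apply: (@eig_link p); last by exists h.2.
  move=> y; rewrite /p (eq_bigr (fun x => t f (ord0, x) * (e x y)%:R + t f (ord_max, x) * (e x y)%:R)).
    by rewrite big_split /= X0 X1; field.
  by move=> x _; rewrite mulrDl.
have Hq : q h.2 != 0.
  apply: contra Ht => /eqP Hq; move/negPn/eqP: Hp => Hp.
  have E0 : t f (ord0, h.2) = (p h.2 + q h.2) / 2 by rewrite /p /q; field.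
  have E1 : t f (ord_max, h.2) = (p h.2 - q h.2) / 2 by rewrite /p /q; field.
  by case: h E0 E1 Hp Hq => [i x] /= E0 E1 Hp Hq; case: (I2P i) => ->; rewrite ?E0 ?E1 Hp Hq ?subr0 ?addr0 mul0r.
exists 0%N, ((l - K) / 2); split; last by field.
apply: (@eig_link q); last by exists h.2.
move=> y; rewrite /q (eq_bigr (fun x => t f (ord0, x) * (e x y)%:R - t f (ord_max, x) * (e x y)%:R)).
  by rewrite sumrB /= X0 X1; field.
by move=> x _; rewrite mulrBl.
Qed.

Lemma AR (a b s : nat) : odd a -> odd b ->
  exists (sgn n : nat), ~~ odd n /\ (a%:R + (-1) ^+ s * b%:R : R) = (-1) ^+ sgn * n%:R.
Proof.
move=> oa ob; rewrite -signr_odd; case: (odd s); rewrite /= ?expr0 ?expr1.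
  case: (leqP b a) => hab.
    exists 0%N, (a - b)%N; split; first by rewrite oddB // oa ob.
    by rewrite expr0 mul1r natrB // mulN1r.
  exists 1%N, (b - a)%N; split; first by rewrite oddB ?oa ?ob // ltnW.
  by rewrite expr1 natrB ?(ltnW hab) //; ring.
exists 0%N, (a + b)%N; split; first by rewrite oddD oa ob.
by rewrite !mul1r natrD.
Qed.

Variables (nu a : nat).
Hypothesis oa : odd a.
Hypothesis ka : k = (a * 2 ^ nu)%N.
Hypothesis Heig : forall mu, eigenvalue (adjmx C e) mu ->
  exists (s b : nat), odd b /\ mu = Cre ((-1) ^+ s * (b * 2 ^ nu)%:R).

Lemma KE : K = Cre (a%:R * 2 ^+ nu.+1).
Proof. by rewrite /Cre -(rmorph_nat (real_complex R)) ka natrM natrM natrX exprS; congr (_%:C)%C; ring. Qed.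

Lemma t_sw f w : t f w.2 = f w + f (sw w).
Proof. by case: w => [i g]; case: (I2P i) => -> //=; rewrite addrC. Qed.

Lemma eig_fun f l : (forall w, f w * K - S f w = l * f w) -> (exists w, f w != 0) ->
  exists (sgn n : nat), l = Cre ((-1) ^+ sgn * n%:R * 2 ^+ nu.+1) /\
     forall w, (-1) ^+ n * f w = f (sw w).
Proof.
move=> H [w0 Hw0].
case: (boolP [exists w, f w != f (sw w)]) => [/existsP [w1 Hw1]|Hall].
  have Hl : l = K.
    have h0 := H w1; have h1 := H (sw w1); rewrite S_sw in h1.
    have : (f w1 - f (sw w1)) * K = l * (f w1 - f (sw w1)).
      by rewrite mulrBl mulrBr -h0 -h1; ring.
    rewrite mulrC => E; symmetry; apply: (mulIf _ E); by rewrite subr_eq0.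
  have Hanti w : f (sw w) = - f w.
    apply/eqP; rewrite -addr_eq0 addrC; apply/negPn/negP => Hne.
    have Ht : t f w.2 != 0 by rewrite t_sw.
    have [s [mu [Hmu Hlm]]] := @t_eig f l H w.2 Ht.
    have mu0 : mu = 0.
      move: Hlm; rewrite Hl -{1}[K]addr0 => /addrI /esym /eqP.
      rewrite !mulf_eq0 signr_eq0 (negbTE two_neq0) /= => /eqP //.
    have [s' [b [ob Hb]]] := Heig mu Hmu.
    move: Hb; rewrite mu0 /Cre => /esym /eqP; rewrite -(rmorph0 (real_complex R)).
    rewrite (inj_eq (@complexI _)) mulf_eq0 signr_eq0 /= pnatr_eq0 muln_eq0 expn_eq0 /=.
    by case: b ob.
  exists 0%N, a; split; first by rewrite Hl KE expr0 mul1r.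
  by move=> w; rewrite Hanti -signr_odd oa expr1 mulN1r.
have Hsym w : f (sw w) = f w.
  by move/existsPn: Hall => /(_ w); rewrite negbK => /eqP.
have Ht : t f w0.2 != 0 by rewrite t_sw Hsym -mulr2n -mulr_natl mulf_neq0 // two_neq0.
have [s [mu [Hmu Hlm]]] := @t_eig f l H w0.2 Ht.
have [s' [b [ob Hb]]] := Heig mu Hmu.
have [sgn [n [en Hn]]] := @AR a b (s + s') oa ob.
exists sgn, n; split; last by move=> w; rewrite Hsym -signr_odd (negbTE en) expr0 mul1r.
have E2 : (2 : C) = Cre 2 by rewrite /Cre rmorph_nat.
have E3 : ((-1) ^+ s : C) = Cre ((-1) ^+ s) by rewrite /Cre rmorphXn rmorphN1.
rewrite Hlm Hb KE E2 E3 /Cre -!rmorphM -rmorphD.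
congr (_%:C)%C; rewrite (mulrA ((-1) ^+ s)) -exprD natrM natrX -Hn exprS; ring.
Qed.

End G.


Lemma cos_pin (R : realType) (n : nat) : cos (pi * n%:R) = (-1) ^+ n :> R.
Proof.
have := alternatingn (@cosDpi R) n 0; rewrite add0r cos0 mulr1 => <-.
by rewrite mulr_natr.
Qed.
Lemma sin_pin (R : realType) (n : nat) : sin (pi * n%:R) = 0 :> R.
Proof.
have := alternatingn (@sinDpi R) n 0; rewrite add0r sin0 mulr0 => <-.
by rewrite mulr_natr.
Qed.

Lemma ImCi (R : realType) (x : R) : complex.Im (Ci R * Cre x) = x.
Proof. by rewrite /= mul0r mul1r add0r. Qed.

Section F.
Variable R : realType.
Variables (T : finType) (e : rel T).
Hypothesis esymm : symmetric e.
Variable k : nat.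
Hypothesis hk : forall x, deg e x = k.
Variables (nu a : nat).
Hypothesis oa : odd a.
Hypothesis ka : k = (a * 2 ^ nu)%N.
Hypothesis Heig : forall mu, eigenvalue (adjmx (CC R) e) mu ->
  exists (s b : nat), odd b /\ mu = Cre ((-1) ^+ s * (b * 2 ^ nu)%:R).

Local Notation C := (CC R).
Local Notation V := (('I_2 * ('I_2 * T))%type : finType).
Local Notation L := (lapmx C (eb T e)).

Lemma eb_sym : symmetric (eb T e).
Proof. by move=> v w; rewrite /eb /blowup2 /eG /dprod_graph /K2 esymm eq_sym. Qed.

Lemma L_sym : L \is symmetricmx.
Proof.
apply/is_hermitianmxP; rewrite expr0 scale1r; apply/matrixP => i j.
rewrite !mxE eb_sym eq_sym; case: eqP => [->|] //; by rewrite !mul0r.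
Qed.

Lemma L_real : L \is a realmx.
Proof. by apply/mxOverP => i j; rewrite !mxE realB // ?realM ?realn. Qed.

Local Notation P := (spectralmx L).
Local Notation sp := (spectral_diag L).

Lemma L_spec : L = invmx P *m diag_mx sp *m P.
Proof. apply/orthomx_spectralP; exact: symmetric_normalmx L_sym L_real. Qed.

Local Notation tau := (pi / 2 ^+ nu.+1 : R).
Local Notation c := (Ci R * Cre tau).
Local Notation d := (c *: sp).
Local Notation fr := (\row_l (Cre (cos (complex.Im (d 0 l))) + Ci R * Cre (sin (complex.Im (d 0 l)))) : 'rV[C]_#|V|).

Lemma row_main l :
  series (fun k => (k`!%:R)^-1 * (d 0 l) ^+ k) N @[N --> \oo] --> fr 0 l /\
  forall j, fr 0 l * P l j = (P *m Wm R T) l j.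
Proof.
set r := row l P.
have Pu : P \in unitmx := spectral_unit _.
have rne : r != 0.
  apply/eqP => r0; have := mulmxV Pu; move/(congr1 (row l)).
  rewrite row_mul -/r r0 mul0mx => /rowP /(_ l); rewrite !mxE eqxx /= => /eqP.
  by rewrite eq_sym oner_eq0.
have rL : r *m L = sp 0 l *: r.
  have E : P *m L = diag_mx sp *m P.
    by rewrite [X in P *m X]L_spec !mulmxA mulmxV // mul1mx.
  by rewrite -row_mul E mul_diag_mx; apply/rowP => j; rewrite !mxE.
have H : forall w, rf R T r w * ((k * 2)%:R : C) - S R T e (rf R T r) w = sp 0 l * rf R T r w.
  by move=> w; rewrite /S -(@lap_row R T e k hk) rL /rf !mxE.
have nz : exists w, rf R T r w != 0.
  move/eqP: rne => /rowP; case/boolP: [forall j, r 0 j == 0] => [/forallP H0|].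
    by move=> Hn; exfalso; apply: Hn => j; rewrite (eqP (H0 j)) mxE.
  move=> /forallPn [j Hj] _; exists (enum_val j); by rewrite /rf enum_valK.
have [sgn [n [Hl Hw]]] := @eig_fun R T e k nu a oa ka Heig _ _ H nz.
have Hd : d 0 l = Ci R * Cre ((-1) ^+ sgn * (pi * n%:R)).
  rewrite mxE Hl /Cre -mulrA -rmorphM; congr (_ * (_)%:C)%C.
  field; by rewrite expf_neq0 // pnatr_eq0.
have Hf : fr 0 l = (-1) ^+ n.
  rewrite mxE Hd ImCi -signr_odd; case: (odd sgn); rewrite ?expr0 ?expr1 ?mul1r ?mulN1r ?cosN ?sinN cos_pin sin_pin ?oppr0.
    by rewrite /Cre rmorph0 mulr0 addr0 rmorphXn rmorphN1.
  by rewrite /Cre rmorph0 mulr0 addr0 rmorphXn rmorphN1.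
split.
  rewrite Hd mxE Hd ImCi; exact: expi_cvg.
move=> j; rewrite Hf.
have HW := @W_row R T r (enum_val j); rewrite enum_valK in HW.
transitivity ((r *m Wm R T) 0 j); last by rewrite -row_mul mxE.
rewrite HW -Hw /rf /r enum_valK mxE //.
Qed.

Lemma exp_main : mexp (c *: L) = Wm R T.
Proof.
have Pu : P \in unitmx := spectral_unit _.
have E : c *: L = invmx P *m diag_mx d *m P.
  rewrite [X in c *: X]L_spec scalemxAl scalemxAr; congr (_ *m _ *m _).
  by apply/matrixP => i j; rewrite !mxE mulrnAr.
rewrite E (@mexp_conj R _ _ _ _ _ (mulmxV Pu) (fun l => (row_main l).1)).
rewrite -mulmxA (_ : diag_mx fr *m P = P *m Wm R T) ?mulKmx //.
by apply/matrixP => i j; rewrite mul_diag_mx mxE (row_main i).2.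
Qed.

End F.

Lemma odd_decomp (n : nat) : (0 < n)%N -> exists b, odd b /\ n = (b * 2 ^ logn 2 n)%N.
Proof. by move=> n0; have [b cb Hb] := pfactor_coprime (isT : prime 2) n0; exists b; rewrite -coprime2n. Qed.

Theorem corollary8 (R : realType) (T : finType) (e : rel T) :
  simple_graph e ->
  regular e ->
  ~ bipartite e ->
  (forall a : CC R, eigenvalue (adjmx (CC R) e) a -> exists z : int, a = z%:~R) ->
  (forall z1 z2 : int,
      eigenvalue (adjmx (CC R) e) z1%:~R ->
      eigenvalue (adjmx (CC R) e) z2%:~R -> nu2 z1 = nu2 z2) ->
  forall u : 'I_2 * T,
    lap_PST R (blowup2 (dprod_graph K2 e)) (ord0, u) (ord_max, u).
Proof.
move=> [esymm eirr] [k hk] nbip Hint Hnu u.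
have Hkeig : eigenvalue (adjmx (CC R) e) k%:R.
  apply: (@eig_link R T e (fun _ => 1)); last by exists u.2; rewrite oner_eq0.
  move=> y; rewrite mulr1 -(hk y) degE natr_sum; apply: eq_bigr => x _.
  by rewrite mul1r esymm.
have k0 : (0 < k)%N.
  rewrite lt0n; apply/negP => /eqP k0; apply: nbip; exists (fun _ => true) => x y exy.
  move: (hk x); rewrite degE k0 (bigD1 y) //= exy => H.
  by move: H; rewrite /GRing.add /=.
have [a [oa ka]] := @odd_decomp k k0.
set nu := logn 2 k in ka.
have Heig : forall mu, eigenvalue (adjmx (CC R) e) mu ->
    exists (s b : nat), odd b /\ mu = Cre ((-1) ^+ s * (b * 2 ^ nu)%:R).
  move=> mu Hmu; have [z Hz] := Hint mu Hmu.
  have := Hnu z (Posz k); rewrite -Hz => /(_ Hmu Hkeig).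
  rewrite /nu2 /=; have -> : (Posz k == 0) = false by apply/negbTE; rewrite -lt0n.
  case: eqP => // z0 [Hlz].
  have zp : (0 < `|z|)%N by rewrite absz_gt0; apply/eqP.
  have [b [ob Hb]] := @odd_decomp _ zp.
  exists (z < 0)%R, b; split => //.
  rewrite Hz {1}(intEsign z) intrM intr_sign.
  have -> : (`|z|%N%:~R : CC R) = `|z|%N%:R by [].
  rewrite Hb Hlz /Cre (rmorphM (real_complex R)) (rmorphXn (real_complex R)) rmorphN1 rmorph_nat.
  by [].
exists (pi / 2 ^+ nu.+1); split.
  by rewrite divr_gt0 ?pi_gt0 // exprn_gt0.
exists 1; rewrite (@exp_main R T e esymm k hk nu a oa ka Heig) W_evec scale1r.
by [].
Qed.
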